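(* For every $\lambda\in(0,1)$, the ladder surface $X_\lambda$ admits an orientation-preserving affine homeomorphism with derivative $$R=\begin{pmatrix}-1&-1\\1&0\end{pmatrix},$$ which is an elliptic element of order $3$ in $\mathrm{PSL}(2,\mathbb{R})$. Equivalently, after applying the linear map $\begin{pmatrix}1&1/2\\0&\sqrt3/2\end{pmatrix}$ to $X_\lambda$, the resulting surface has the rotation by $2\pi/3$ in its Veech group.
   Context: Notation: for $\lambda>0$ put $s_{-1}=0$ and $s_n=\sum_{i=0}^{n}\lambda^i$ for $n\ge 0$. Let $L_\lambda$ be the infinite polygonal path with consecutive vertices $(0,0),(s_0,0)$ and then, for $n\ge1$, the two vertices $(s_n,s_{n-2})$ and $(s_n,s_{n-1})$. Let $U_\lambda$ be its reflection in the line $y=x$. The \emph{ladder surface} $X_\lambda$ is the translation surface obtained from the open region bounded by $L_\lambda$ and $U_\lambda$ by identifying, via translation, each edge of $L_\lambda$ with the edge of $U_\lambda$ that is parallel to it and of the same length. Vertices are not points of $X_\lambda$. An affine homeomorphism is one that is locally of the form $z\mapsto Az+t$ in translation charts; the matrix $A$ is its derivative. The Veech group is the image in $\mathrm{PSL}(2,\mathbb{R})$ of the derivatives of orientation-preserving affine homeomorphisms. *)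

(* Defs.v *)
From Stdlib Require Import Reals Lra.
Open Scope R_scope.

Definition pt := (R * R)%type.
Definition padd (p q : pt) : pt := (fst p + fst q, snd p + snd q).
Definition psub (p q : pt) : pt := (fst p - fst q, snd p - snd q).
Definition pscale (t : R) (p : pt) : pt := (t * fst p, t * snd p).
Definition pswap (p : pt) : pt := (snd p, fst p).
Definition popp (p : pt) : pt := (- fst p, - snd p).
Definition pnorm2 (p : pt) : R := fst p * fst p + snd p * snd p.

(* sp lam k = s_{k-1} = sum_{i<k} lam^i; so sp lam 0 = s_{-1} = 0. *)
Fixpoint sp (lam : R) (k : nat) : R :=
  match k with O => 0 | S k' => sp lam k' + lam ^ k' end.

(* Vertices of L_lam: Lv 0 = (0,0), Lv 1 = (s_0, 0) = (s_0, s_{-1}),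
   and for n >= 1: Lv (2n) = (s_n, s_{n-2}), Lv (2n+1) = (s_n, s_{n-1}). *)
Definition Lv (lam : R) (k : nat) : pt :=
  match k with
  | O => (0, 0)
  | S m => let n := Nat.div2 m in
           if Nat.even m then (sp lam (n + 1), sp lam n)
           else (sp lam (n + 2), sp lam n)
  end.

Definition Uv (lam : R) (k : nat) : pt := pswap (Lv lam k).

Definition closed_seg (a b z : pt) : Prop :=
  exists t, 0 <= t <= 1 /\ z = padd a (pscale t (psub b a)).
Definition open_seg (a b z : pt) : Prop :=
  exists t, 0 < t < 1 /\ z = padd a (pscale t (psub b a)).

Definition Lpath (lam : R) (z : pt) : Prop :=
  exists k, closed_seg (Lv lam k) (Lv lam (S k)) z.

Definition aboveL (lam : R) (p : pt) : Prop :=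
  (exists t, Lpath lam (fst p, t)) /\
  (forall t, Lpath lam (fst p, t) -> t < snd p).

(* the open region bounded by L and U: strictly above L and strictly
   below/right of U = reflection of "strictly above L" *)
Definition Region (lam : R) (p : pt) : Prop :=
  aboveL lam p /\ aboveL lam (pswap p).

Definition LE (lam : R) (k : nat) (z : pt) : Prop :=
  open_seg (Lv lam k) (Lv lam (S k)) z.
Definition UE (lam : R) (j : nat) (z : pt) : Prop :=
  open_seg (Uv lam j) (Uv lam (S j)) z.

Definition paired (lam : R) (k j : nat) : Prop :=
  let u := psub (Lv lam (S k)) (Lv lam k) in
  let w := psub (Uv lam (S j)) (Uv lam j) in
  u = w \/ u = popp w.

Definition midpoint (a b : pt) : pt := pscale (1/2) (padd a b).

(* z on an edge of L is identified with w on the paired edge of U via the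
   translation carrying the first edge onto the second *)
Definition glue (lam : R) (z w : pt) : Prop :=
  exists k j, paired lam k j /\ LE lam k z /\ UE lam j w /\
    psub w z = psub (midpoint (Uv lam j) (Uv lam (S j)))
                    (midpoint (Lv lam k) (Lv lam (S k))).

(* Carrier of X_lam: we represent each point of X_lam by its canonical
   planar representative: a point of the open region, or a point of an open
   edge of L (points of open edges of U are identified with these). *)
Definition XS (lam : R) (z : pt) : Prop :=
  Region lam z \/ exists k, LE lam k z.

Definition rep (lam : R) (z q : pt) : Prop :=
  (XS lam z /\ q = z) \/ glue lam q z.

(* standard translation chart at p in X_lam: q is the point at displacement v
   from p (meaningful for |v| small) *)
Definition chartR (lam : R) (p v q : pt) : Prop :=
  rep lam (padd p v) q \/
  exists p', glue lam p p' /\ rep lam (padd p' v) q.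

Definition Xopen (lam : R) (U : pt -> Prop) : Prop :=
  (forall p, U p -> XS lam p) /\
  (forall p, U p -> exists eps, 0 < eps /\
     forall v q, pnorm2 v < eps * eps -> chartR lam p v q -> U q).

Record mat2 := Mat2 { m11 : R; m12 : R; m21 : R; m22 : R }.
Definition mapply (A : mat2) (v : pt) : pt :=
  (m11 A * fst v + m12 A * snd v, m21 A * fst v + m22 A * snd v).
Definition mmul (A B : mat2) : mat2 :=
  Mat2 (m11 A * m11 B + m12 A * m21 B) (m11 A * m12 B + m12 A * m22 B)
       (m21 A * m11 B + m22 A * m21 B) (m21 A * m12 B + m22 A * m22 B).
Definition mdet (A : mat2) : R := m11 A * m22 A - m12 A * m21 A.
Definition mtrace (A : mat2) : R := m11 A + m22 A.
Definition mid2 : mat2 := Mat2 1 0 0 1.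
Definition mneg_id2 : mat2 := Mat2 (-1) 0 0 (-1).

Definition affine_homeo (lam : R) (A : mat2) (f : pt -> pt) : Prop :=
  (forall p, XS lam p -> XS lam (f p)) /\
  (forall p q, XS lam p -> XS lam q -> f p = f q -> p = q) /\
  (forall q, XS lam q -> exists p, XS lam p /\ f p = q) /\
  (forall U, Xopen lam U -> Xopen lam (fun p => XS lam p /\ U (f p))) /\
  (forall U, Xopen lam U -> Xopen lam (fun q => exists p, U p /\ f p = q)) /\
  (forall p, XS lam p -> exists eps, 0 < eps /\
     forall v q, pnorm2 v < eps * eps -> chartR lam p v q ->
       chartR lam (f p) (mapply A v) (f q)).

Definition orientation_preserving (A : mat2) : Prop := 0 < mdet A.

Definition Rmat : mat2 := Mat2 (-1) (-1) 1 0.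

(* Main.v *)
Require Import Defs.
From Stdlib Require Import Reals Lra Lia ClassicalEpsilon.
Open Scope R_scope.

Lemma sp_S lam k : sp lam (S k) = sp lam k + lam ^ k.
Proof. reflexivity. Qed.

Lemma sp_lt_S lam k : 0 < lam -> sp lam k < sp lam (S k).
Proof. intros H. rewrite sp_S. pose proof (pow_lt lam k H). lra. Qed.

Lemma sp_lt lam i j : 0 < lam -> (i < j)%nat -> sp lam i < sp lam j.
Proof.
  intros H Hij. induction Hij.
  - apply sp_lt_S; auto.
  - pose proof (sp_lt_S lam m H). lra.
Qed.

Lemma sp_le lam i j : 0 < lam -> (i <= j)%nat -> sp lam i <= sp lam j.
Proof.
  intros H Hij. destruct (Nat.eq_dec i j). subst; lra.
  left. apply sp_lt; auto. lia.
Qed.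

Lemma sp_lt_inv lam i j : 0 < lam -> sp lam i < sp lam j -> (i < j)%nat.
Proof.
  intros H Hs. destruct (Nat.lt_ge_cases i j); auto.
  pose proof (sp_le lam j i H H0). lra.
Qed.

Lemma sp_le_inv lam i j : 0 < lam -> sp lam i <= sp lam j -> (i <= j)%nat.
Proof.
  intros H Hs. destruct (Nat.le_gt_cases i j); auto.
  pose proof (sp_lt lam j i H H0). lra.
Qed.

Lemma sp_nonneg lam k : 0 < lam -> 0 <= sp lam k.
Proof. intros H. change 0 with (sp lam 0). apply sp_le; auto; lia. Qed.

Definition ca lam n := sp lam (n - 1).
Definition cb lam n := sp lam n.
Definition cc lam n := sp lam (S n).
Definition cd lam n := sp lam (S (S n)).
Definition ce lam n := sp lam (n - 2).

Lemma caS lam n : ca lam (S n) = cb lam n.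
Proof. unfold ca, cb. f_equal; try lia. Qed.
Lemma cbS lam n : cb lam (S n) = cc lam n.
Proof. reflexivity. Qed.
Lemma ccS lam n : cc lam (S n) = cd lam n.
Proof. reflexivity. Qed.
Lemma ceS lam n : ce lam (S n) = ca lam n.
Proof. unfold ce, ca. f_equal; try lia. Qed.
Lemma ca0 lam : ca lam 0 = 0.  Proof. reflexivity. Qed.
Lemma cb0 lam : cb lam 0 = 0.  Proof. reflexivity. Qed.
Lemma ce0 lam : ce lam 0 = 0.  Proof. reflexivity. Qed.

Lemma col_facts lam n : 0 < lam ->
  0 <= ce lam n /\ ce lam n <= ca lam n /\ ca lam n <= cb lam n /\
  cb lam n < cc lam n /\ cc lam n < cd lam n.
Proof.
  intros H. unfold ce, ca, cb, cc, cd.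
  repeat split.
  - apply sp_nonneg; auto.
  - apply sp_le; auto; lia.
  - apply sp_le; auto; lia.
  - apply sp_lt; auto.
  - apply sp_lt; auto.
Qed.

Lemma col_uniq lam i j X : 0 < lam ->
  cb lam i < X <= cc lam i -> cb lam j < X <= cc lam j -> i = j.
Proof.
  intros H Hi Hj. unfold cb, cc in *.
  destruct (Nat.lt_trichotomy i j) as [h|[h|h]]; auto.
  - pose proof (sp_le lam (S i) j H h). lra.
  - pose proof (sp_le lam (S j) i H h). lra.
Qed.

Lemma sp_not_in lam k n : 0 < lam ->
  cb lam n < sp lam k -> sp lam k < cc lam n -> False.
Proof.
  intros H h1 h2. unfold cb, cc in *.
  apply sp_lt_inv in h1; auto. apply sp_lt_inv in h2; auto. lia.
Qed.
Arguments ca : simpl never.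
Arguments cb : simpl never.
Arguments cc : simpl never.
Arguments cd : simpl never.
Arguments ce : simpl never.

Lemma Lv0 lam : Lv lam 0 = (0,0).
Proof. reflexivity. Qed.
Lemma Lv_odd lam j : Lv lam (S (2*j)) = (sp lam (S j), sp lam j).
Proof.
  unfold Lv. rewrite Nat.even_even, Nat.div2_double.
  f_equal. f_equal. lia.
Qed.
Lemma Lv_even lam j : Lv lam (S (S (2*j))) = (sp lam (S (S j)), sp lam j).
Proof.
  unfold Lv. replace (S (2*j)) with (2*j+1)%nat by lia.
  rewrite Nat.even_odd. replace (2*j+1)%nat with (S (2*j)) by lia.
  rewrite Nat.div2_succ_double. f_equal. f_equal. lia.
Qed.
Lemma Lv_odd' lam j : Lv lam (S (S (S (2*j)))) = (sp lam (S (S j)), sp lam (S j)).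
Proof.
  replace (S (S (2*j))) with (2 * S j)%nat by lia. apply Lv_odd.
Qed.

Lemma nat_cases k : k = 0%nat \/ (exists j, k = S (2*j)) \/ (exists j, k = S (S (2*j))).
Proof.
  destruct k. left; auto. right.
  destruct (Nat.Even_or_Odd k) as [[j Hj]|[j Hj]].
  - left. exists j. lia.
  - right. exists j. lia.
Qed.

Lemma pt_eq (z : pt) x y : fst z = x -> snd z = y -> z = (x,y).
Proof. destruct z; simpl; intros; subst; auto. Qed.

Lemma oseg_h x1 x2 y0 z : x1 < x2 ->
  (open_seg (x1,y0) (x2,y0) z <-> snd z = y0 /\ x1 < fst z < x2).
Proof.
  intros H. unfold open_seg, padd, pscale, psub; simpl. split.
  - intros [t [Ht E]]. subst z; simpl. split. ring. nra.
  - intros [E1 E2]. exists ((fst z - x1)/(x2-x1)). split.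
    + split. apply Rdiv_lt_0_compat; lra.
      apply (Rmult_lt_reg_r (x2 - x1)). lra. field_simplify; lra.
    + destruct z as [zx zy]; simpl in *. f_equal. field. lra. subst; ring.
Qed.

Lemma oseg_v x0 y1 y2 z : y1 < y2 ->
  (open_seg (x0,y1) (x0,y2) z <-> fst z = x0 /\ y1 < snd z < y2).
Proof.
  intros H. unfold open_seg, padd, pscale, psub; simpl. split.
  - intros [t [Ht E]]. subst z; simpl. split. ring. nra.
  - intros [E1 E2]. exists ((snd z - y1)/(y2-y1)). split.
    + split. apply Rdiv_lt_0_compat; lra.
      apply (Rmult_lt_reg_r (y2 - y1)). lra. field_simplify; lra.
    + destruct z as [zx zy]; simpl in *. f_equal. subst; ring. field. lra.
Qed.

Lemma cseg_h x1 x2 y0 z : x1 < x2 ->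
  (closed_seg (x1,y0) (x2,y0) z <-> snd z = y0 /\ x1 <= fst z <= x2).
Proof.
  intros H. unfold closed_seg, padd, pscale, psub; simpl. split.
  - intros [t [Ht E]]. subst z; simpl. split. ring. nra.
  - intros [E1 E2]. exists ((fst z - x1)/(x2-x1)). split.
    + split. apply Rmult_le_pos. lra. left; apply Rinv_0_lt_compat; lra.
      apply (Rmult_le_reg_r (x2 - x1)). lra. field_simplify; lra.
    + destruct z as [zx zy]; simpl in *. f_equal. field. lra. subst; ring.
Qed.

Lemma cseg_v x0 y1 y2 z : y1 <= y2 ->
  (closed_seg (x0,y1) (x0,y2) z <-> fst z = x0 /\ y1 <= snd z <= y2).
Proof.
  intros H. unfold closed_seg, padd, pscale, psub; simpl. split.
  - intros [t [Ht E]]. subst z; simpl. split. ring. nra.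
  - intros [E1 E2]. destruct H as [H|H].
    + exists ((snd z - y1)/(y2-y1)). split.
      * split. apply Rmult_le_pos. lra. left; apply Rinv_0_lt_compat; lra.
        apply (Rmult_le_reg_r (y2 - y1)). lra. field_simplify; lra.
      * destruct z as [zx zy]; simpl in *. f_equal. subst; ring. field. lra.
    + subst y2. exists 0. split. lra. destruct z as [zx zy]; simpl in *.
      f_equal; subst; try ring. lra.
Qed.

Definition Lh lam n (z:pt) := snd z = ca lam n /\ cb lam n < fst z < cc lam n.
Definition Lvt lam n (z:pt) := fst z = cc lam n /\ ca lam n < snd z < cb lam n.
Definition Lhc lam n (z:pt) := snd z = ca lam n /\ cb lam n <= fst z <= cc lam n.
Definition Lvc lam n (z:pt) := fst z = cc lam n /\ ca lam n <= snd z <= cb lam n.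

Lemma LE0 lam z : 0 < lam -> (LE lam 0 z <-> Lh lam 0 z).
Proof.
  intros H. unfold LE, Lh. rewrite Lv0. change (Lv lam 1) with (Lv lam (S (2*0))).
  rewrite Lv_odd. simpl sp. unfold ca, cb, cc; simpl sp.
  replace (0 + 1 ^ 0) with 1 by (simpl; ring).
  replace (0 + lam ^ 0) with 1 by (simpl; ring).
  apply oseg_h. lra.
Qed.

Lemma LEodd lam j z : 0 < lam -> (LE lam (S (2*j)) z <-> Lh lam (S j) z).
Proof.
  intros H. unfold LE, Lh. rewrite Lv_odd, Lv_even.
  rewrite caS, cbS, ccS. unfold cb, cc, cd.
  apply oseg_h. apply sp_lt_S; auto.
Qed.

Lemma LEeven lam j z : 0 < lam -> (LE lam (S (S (2*j))) z <-> Lvt lam (S j) z).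
Proof.
  intros H. unfold LE, Lvt. rewrite Lv_even, Lv_odd'.
  rewrite caS, cbS, ccS. unfold cb, cc, cd.
  apply oseg_v. apply sp_lt_S; auto.
Qed.

Lemma Lpath0 lam z : 0 < lam -> (closed_seg (Lv lam 0) (Lv lam 1) z <-> Lhc lam 0 z).
Proof.
  intros H. unfold Lhc. rewrite Lv0. change (Lv lam 1) with (Lv lam (S (2*0))).
  rewrite Lv_odd. unfold ca, cb, cc; simpl sp.
  replace (0 + lam ^ 0) with 1 by (simpl; ring).
  apply cseg_h. lra.
Qed.

Lemma Lpathodd lam j z : 0 < lam ->
  (closed_seg (Lv lam (S (2*j))) (Lv lam (S (S (2*j)))) z <-> Lhc lam (S j) z).
Proof.
  intros H. unfold Lhc. rewrite Lv_odd, Lv_even.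
  rewrite caS, cbS, ccS. unfold cb, cc, cd.
  apply cseg_h. apply sp_lt_S; auto.
Qed.

Lemma Lpatheven lam j z : 0 < lam ->
  (closed_seg (Lv lam (S (S (2*j)))) (Lv lam (S (S (S (2*j))))) z <-> Lvc lam (S j) z).
Proof.
  intros H. unfold Lvc. rewrite Lv_even, Lv_odd'.
  rewrite caS, cbS, ccS. unfold cb, cc, cd.
  apply cseg_v. left. apply sp_lt_S; auto.
Qed.

Lemma LE_iff lam z : 0 < lam ->
  ((exists k, LE lam k z) <-> exists n, Lh lam n z \/ Lvt lam n z).
Proof.
  intros H. split.
  - intros [k Hk]. destruct (nat_cases k) as [->|[[j ->]|[j ->]]].
    + exists 0%nat. left. apply LE0; auto.
    + exists (S j). left. apply LEodd; auto.
    + exists (S j). right. apply LEeven; auto.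
  - intros [n [Hn|Hn]].
    + destruct n. exists 0%nat. apply LE0; auto.
      exists (S (2*n)). apply LEodd; auto.
    + destruct n.
      * exfalso. destruct Hn as [_ Hn]. rewrite ca0, cb0 in Hn. lra.
      * exists (S (S (2*n))). apply LEeven; auto.
Qed.

Lemma Lpath_iff lam z : 0 < lam ->
  (Lpath lam z <-> exists n, Lhc lam n z \/ Lvc lam n z).
Proof.
  intros H. unfold Lpath. split.
  - intros [k Hk]. destruct (nat_cases k) as [->|[[j ->]|[j ->]]].
    + exists 0%nat. left. apply Lpath0; auto.
    + exists (S j). left. apply Lpathodd; auto.
    + exists (S j). right. apply Lpatheven; auto.
  - intros [n [Hn|Hn]].
    + destruct n. exists 0%nat. apply Lpath0; auto.
      exists (S (2*n)). apply Lpathodd; auto.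
    + destruct n.
      * exists 0%nat. apply Lpath0; auto. destruct Hn as [E Hn].
        rewrite ca0, cb0 in Hn. split. rewrite ca0. lra.
        rewrite E. pose proof (col_facts lam 0 H). rewrite cb0 in *. lra.
      * exists (S (S (2*n))). apply Lpatheven; auto.
Qed.

Lemma oseg_swap a b z : open_seg (pswap a) (pswap b) z <-> open_seg a b (pswap z).
Proof.
  unfold open_seg, pswap, padd, pscale, psub. destruct a, b, z; simpl.
  split; intros [t [Ht E]]; exists t; split; auto; inversion E; subst; auto.
Qed.

Lemma UE_LE lam j z : UE lam j z <-> LE lam j (pswap z).
Proof. unfold UE, LE, Uv. apply oseg_swap. Qed.

Lemma ca_le lam i j : 0 < lam -> (i <= j)%nat -> ca lam i <= ca lam j.
Proof. intros. unfold ca. apply sp_le; auto. lia. Qed.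
Lemma cc_le lam i j : 0 < lam -> (i <= j)%nat -> cc lam i <= cc lam j.
Proof. intros. unfold cc. apply sp_le; auto. lia. Qed.

Lemma locate lam N y : 0 < lam -> 0 <= y < cc lam N ->
  exists k, (k <= N)%nat /\ cb lam k <= y < cc lam k.
Proof.
  intros H. induction N; intros Hy.
  - exists 0%nat. rewrite cb0. split; auto; lra.
  - destruct (Rlt_le_dec y (cc lam N)).
    + destruct IHN as [k [Hk1 Hk2]]. lra. exists k. split; auto.
    + exists (S N). split; auto. rewrite cbS. lra.
Qed.

Lemma aboveL_iff lam x y : 0 < lam ->
  (aboveL lam (x,y) <-> exists k, cb lam k <= x < cc lam k /\ ca lam k < y).
Proof.
  intros H. unfold aboveL; simpl. split.
  - intros [[t Ht] Hall]. apply Lpath_iff in Ht; auto.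
    destruct Ht as [j [[E Hj]|[E Hj]]]; simpl in *.
    + destruct (Rlt_le_dec x (cc lam j)).
      * exists j. split. lra. apply Hall. apply Lpath_iff; auto. exists j. left.
        unfold Lhc; simpl. split; auto; lra.
      * exists (S j). pose proof (col_facts lam (S j) H). rewrite cbS in *.
        split. split. lra. rewrite ccS. pose proof (col_facts lam j H). lra.
        rewrite caS. apply Hall. apply Lpath_iff; auto. exists j. right.
        unfold Lvc; simpl. split. lra. pose proof (col_facts lam j H). lra.
    + exists (S j). rewrite cbS, ccS, caS. pose proof (col_facts lam j H).
      split. lra. apply Hall. apply Lpath_iff; auto. exists j. right.
      unfold Lvc; simpl. split. lra. lra.
  - intros [k [Hk Hy]]. split.
    + exists (ca lam k). apply Lpath_iff; auto. exists k. left. unfold Lhc; simpl. lra.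
    + intros t Ht. apply Lpath_iff in Ht; auto.
      destruct Ht as [j [[E Hj]|[E Hj]]]; simpl in *.
      * assert (j <= k)%nat.
        { assert (sp lam j < sp lam (S k)) by (unfold cb, cc in *; lra).
          apply sp_lt_inv in H0; auto. lia. }
        pose proof (ca_le lam j k H H0). lra.
      * assert (S j = k).
        { unfold cb, cc in *.
          assert (sp lam (S j) < sp lam (S k)) by lra.
          assert (sp lam k <= sp lam (S j)) by lra.
          apply sp_lt_inv in H0; auto. apply sp_le_inv in H1; auto. lia. }
        subst k. rewrite caS in Hy. lra.
Qed.

Definition InP lam n (z:pt) :=
  (cb lam n < fst z < cc lam n /\ ca lam n < snd z < cd lam n) \/
  (fst z = cc lam n /\ cb lam n < snd z < cd lam n) \/
  (snd z = ca lam n /\ cb lam n < fst z < cc lam n) \/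
  (fst z = cc lam n /\ ca lam n < snd z < cb lam n).

Lemma InP_col lam n z : 0 < lam -> InP lam n z -> cb lam n < fst z <= cc lam n.
Proof.
  intros H Hz. pose proof (col_facts lam n H).
  destruct Hz as [h|[h|[h|h]]]; lra.
Qed.

Lemma InP_uniq lam n m z : 0 < lam -> InP lam n z -> InP lam m z -> n = m.
Proof.
  intros H h1 h2. apply InP_col in h1; auto. apply InP_col in h2; auto.
  eapply col_uniq; eauto.
Qed.

Lemma Region_iff lam x y : 0 < lam ->
  (Region lam (x,y) <-> exists n, InP lam n (x,y) /\
     ((cb lam n < x < cc lam n /\ ca lam n < y < cd lam n) \/
      (x = cc lam n /\ cb lam n < y < cd lam n))).
Proof.
  intros H. unfold Region. unfold pswap; simpl.
  rewrite !aboveL_iff; auto. split.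
  - intros [[k [Hk Hy]] [k' [Hk' Hx]]].
    pose proof (col_facts lam k H). pose proof (col_facts lam k' H).
    destruct (Req_dec x (cb lam k)) as [E|NE].
    + destruct k as [|m].
      * rewrite cb0 in E. unfold ca in Hx. pose proof (sp_nonneg lam (k'-1) H). lra.
      * rewrite cbS in E. exists m.
        assert (Hs : y < cd lam m).
        { assert (k' <= S m)%nat.
          { assert (sp lam (k'-1) < sp lam (S m)) by (unfold ca, cc in *; lra).
            apply sp_lt_inv in H2; auto. lia. }
          pose proof (cc_le lam k' (S m) H H2). rewrite ccS in H3. lra. }
        rewrite caS in Hy. split. right; left; simpl; lra. right; simpl; lra.
    + exists k.
      assert (Hs : y < cd lam k).
      { assert (k' <= S k)%nat.
        { assert (sp lam (k'-1) < sp lam (S k)) by (unfold ca, cc in *; lra).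
          apply sp_lt_inv in H2; auto. lia. }
        pose proof (cc_le lam k' (S k) H H2). rewrite ccS in H3. lra. }
      split; left; simpl; lra.
  - intros [n [_ Hn]]. pose proof (col_facts lam n H).
    pose proof (col_facts lam (S n) H). rewrite caS, cbS, ccS in H1.
    destruct Hn as [Hn|Hn].
    + split. exists n. lra.
      destruct (locate lam (S n) y H) as [k [Hk1 Hk2]]. rewrite ccS. lra.
      exists k. split. lra. pose proof (ca_le lam k (S n) H Hk1). rewrite caS in H2. lra.
    + split. exists (S n). rewrite cbS, ccS, caS. lra.
      destruct (locate lam (S n) y H) as [k [Hk1 Hk2]]. rewrite ccS. lra.
      exists k. split. lra. pose proof (ca_le lam k (S n) H Hk1). rewrite caS in H2. lra.
Qed.

Lemma XS_iff lam z : 0 < lam -> (XS lam z <-> exists n, InP lam n z).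
Proof.
  intros H. destruct z as [x y]. unfold XS. split.
  - intros [R|L].
    + apply Region_iff in R; auto. destruct R as [n [Hn _]]. eauto.
    + apply LE_iff in L; auto. destruct L as [n [h|h]]; exists n; unfold InP;
      unfold Lh, Lvt in h; tauto.
  - intros [n Hn]. destruct Hn as [h|[h|[h|h]]].
    + left. apply Region_iff; auto. exists n. split. left; auto. left; auto.
    + left. apply Region_iff; auto. exists n. split. right; left; auto. right; auto.
    + right. apply LE_iff; auto. exists n. left. unfold Lh. auto.
    + right. apply LE_iff; auto. exists n. right. unfold Lvt. auto.
Qed.

Lemma pow_strict lam i j : 0 < lam < 1 -> (i < j)%nat -> lam ^ j < lam ^ i.
Proof.
  intros H Hij. induction Hij.
  - simpl. pose proof (pow_lt lam i (proj1 H)). nra.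
  - simpl. pose proof (pow_lt lam m (proj1 H)). nra.
Qed.

Lemma pow_inj lam i j : 0 < lam < 1 -> lam ^ i = lam ^ j -> i = j.
Proof.
  intros H E. destruct (Nat.lt_trichotomy i j) as [h|[h|h]]; auto.
  - pose proof (pow_strict lam i j H h). lra.
  - pose proof (pow_strict lam j i H h). lra.
Qed.

Definition kh (n : nat) : nat := match n with O => O | S j => S (2*j) end.
Definition kv (n : nat) : nat := S (S (2*n)).

Lemma Lv_kh lam n : Lv lam (kh n) = (cb lam n, ca lam n) /\ Lv lam (S (kh n)) = (cc lam n, ca lam n).
Proof.
  destruct n.
  - split; reflexivity.
  - change (kh (S n)) with (S (2*n)). rewrite caS.
    rewrite Lv_odd, Lv_even. split; reflexivity.
Qed.

Lemma Lv_kv lam n : Lv lam (kv n) = (cc lam (S n), ca lam (S n)) /\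
                    Lv lam (S (kv n)) = (cc lam (S n), cb lam (S n)).
Proof.
  unfold kv. rewrite Lv_even, Lv_odd', caS. split; reflexivity.
Qed.

Lemma LE_kh lam n z : 0 < lam -> (LE lam (kh n) z <-> Lh lam n z).
Proof. intros H. destruct n. apply LE0; auto. change (kh (S n)) with (S (2*n)). apply LEodd; auto. Qed.
Lemma LE_kv lam n z : 0 < lam -> (LE lam (kv n) z <-> Lvt lam (S n) z).
Proof. intros H. unfold kv. apply LEeven; auto. Qed.

Lemma k_kinds k : (exists n, k = kh n) \/ (exists n, k = kv n).
Proof.
  destruct (nat_cases k) as [->|[[j ->]|[j ->]]].
  - left. exists 0%nat. auto.
  - left. exists (S j). auto.
  - right. exists j. auto.
Qed.

Lemma swap_pair (a b : R) : pswap (a,b) = (b,a).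
Proof. reflexivity. Qed.

Definition GL lam (q z : pt) : Prop := exists n,
  (exists x, cb lam n < x < cc lam n /\ z = (x, cd lam n) /\ q = (x, ca lam n)) \/
  (exists y, cb lam n < y < cc lam n /\ z = (ca lam n, y) /\ q = (cd lam n, y)).

Lemma lenh lam n : cc lam n - cb lam n = lam ^ n.
Proof. unfold cc, cb. rewrite sp_S. ring. Qed.
Lemma lenv lam n : cb lam (S n) - ca lam (S n) = lam ^ n.
Proof. rewrite caS, cbS. apply lenh. Qed.

Lemma glue_iff lam q z : 0 < lam < 1 -> (glue lam q z <-> GL lam q z).
Proof.
  intros H. assert (H0 : 0 < lam) by lra. split.
  - intros [k [j [Hp [Hq [Hz Hm]]]]]. unfold paired, Uv in Hp, Hm.
    rewrite UE_LE in Hz.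
    destruct (k_kinds k) as [[m ->]|[m ->]]; destruct (k_kinds j) as [[m' ->]|[m' ->]].
    + exfalso. destruct (Lv_kh lam m) as [E1 E2]. destruct (Lv_kh lam m') as [E3 E4].
      rewrite E1, E2, E3, E4 in Hp. unfold psub, popp, pswap in Hp; simpl in Hp.
      pose proof (lenh lam m). pose proof (pow_lt lam m H0).
      destruct Hp as [Hp|Hp]; injection Hp; intros; lra.
    + destruct (Lv_kh lam m) as [E1 E2]. destruct (Lv_kv lam m') as [E3 E4].
      rewrite E1, E2, E3, E4 in Hp, Hm. unfold psub, popp, pswap in Hp; simpl in Hp.
      pose proof (lenh lam m). pose proof (lenv lam m'). pose proof (pow_lt lam m H0).
      assert (m = m').
      { destruct Hp as [Hp|Hp]; injection Hp; intros.
        - apply (pow_inj lam); auto. lra.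
        - pose proof (pow_lt lam m' H0). lra. }
      subst m'. apply LE_kh in Hq; auto. apply LE_kv in Hz; auto.
      unfold Lh, Lvt in Hq, Hz. destruct z as [zx zy], q as [qx qy]; simpl in *.
      rewrite ccS in Hz. rewrite caS, cbS in Hz.
      unfold midpoint, psub, pswap, pscale, padd in Hm; simpl in Hm; rewrite ?caS, ?cbS, ?ccS in Hm.
      injection Hm; intros. exists m. left. exists qx. split. lra.
      split; f_equal; lra.
    + destruct (Lv_kv lam m) as [E1 E2]. destruct (Lv_kh lam m') as [E3 E4].
      rewrite E1, E2, E3, E4 in Hp, Hm. unfold psub, popp, pswap in Hp; simpl in Hp.
      pose proof (lenh lam m'). pose proof (lenv lam m). pose proof (pow_lt lam m H0).
      assert (m = m').
      { destruct Hp as [Hp|Hp]; injection Hp; intros.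
        - apply (pow_inj lam); auto; lra.
        - pose proof (pow_lt lam m' H0). lra. }
      subst m'. apply LE_kv in Hq; auto. apply LE_kh in Hz; auto.
      unfold Lh, Lvt in Hq, Hz. destruct z as [zx zy], q as [qx qy]; simpl in *.
      rewrite ccS in Hq. rewrite caS, cbS in Hq.
      unfold midpoint, psub, pswap, pscale, padd in Hm; simpl in Hm; rewrite ?caS, ?cbS, ?ccS in Hm.
      injection Hm; intros. exists m. right. exists qy. split. lra.
      split; f_equal; lra.
    + exfalso. destruct (Lv_kv lam m) as [E1 E2]. destruct (Lv_kv lam m') as [E3 E4].
      rewrite E1, E2, E3, E4 in Hp. unfold psub, popp, pswap in Hp; simpl in Hp.
      pose proof (lenv lam m). pose proof (pow_lt lam m H0).
      destruct Hp as [Hp|Hp]; injection Hp; intros; lra.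
  - intros [n [[x [Hx [-> ->]]]|[y [Hy [-> ->]]]]].
    + exists (kh n), (kv n).
      destruct (Lv_kh lam n) as [E1 E2]. destruct (Lv_kv lam n) as [E3 E4].
      unfold paired, Uv. rewrite E1, E2, E3, E4. rewrite caS, cbS, ccS.
      split. left. unfold psub, pswap; simpl. f_equal; ring.
      split. apply LE_kh; auto. unfold Lh; simpl; lra.
      split. rewrite UE_LE. apply LE_kv; auto. unfold Lvt; simpl.
      rewrite caS, cbS, ccS. lra.
      unfold midpoint, psub, pswap, pscale, padd; simpl. f_equal; field.
    + exists (kv n), (kh n).
      destruct (Lv_kh lam n) as [E1 E2]. destruct (Lv_kv lam n) as [E3 E4].
      unfold paired, Uv. rewrite E1, E2, E3, E4. rewrite caS, cbS, ccS.
      split. left. unfold psub, pswap; simpl. f_equal; ring.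
      split. apply LE_kv; auto. unfold Lvt; simpl. rewrite caS, cbS, ccS. lra.
      split. rewrite UE_LE. apply LE_kh; auto. unfold Lh; simpl; lra.
      unfold midpoint, psub, pswap, pscale, padd; simpl. f_equal; field.
Qed.

Definition Wr lam n r := if Rle_dec r (ca lam n) then r + (cd lam n - ca lam n) else r.
Definition F lam n (p:pt) : pt :=
  if Req_EM_T (fst p) (cc lam n) then
    (if Rlt_dec (snd p) (cb lam n) then (ca lam n + cb lam n - snd p, ce lam n)
     else (Wr lam n (ca lam n + cb lam n + cc lam n - fst p - snd p), fst p))
  else (Wr lam n (ca lam n + cb lam n + cc lam n - fst p - snd p), fst p).

Definition col lam (p:pt) : nat := epsilon (inhabits 0%nat) (fun n => InP lam n p).
Definition fm lam (p:pt) : pt := F lam (col lam p) p.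

Lemma col_eq lam n p : 0 < lam -> InP lam n p -> col lam p = n.
Proof.
  intros H Hn. unfold col. pose proof (epsilon_spec (inhabits 0%nat) (fun n => InP lam n p)).
  simpl in H0. apply (InP_uniq lam _ _ p H); auto. apply H0. exists n; auto.
Qed.

Lemma f_eq lam n p : 0 < lam -> InP lam n p -> fm lam p = F lam n p.
Proof. intros H Hn. unfold fm. rewrite (col_eq lam n p H Hn). reflexivity. Qed.

Ltac simplcol := repeat (rewrite ?caS, ?cbS, ?ccS, ?ceS, ?ca0, ?cb0, ?ce0 in *).

Ltac solve_InP := unfold InP; cbn [fst snd]; simplcol;
  first [left; lra | right; left; lra | right; right; left; lra | right; right; right; lra].

Ltac destr_ifs := repeat match goal with
  | |- context [Req_EM_T ?a ?b] => destruct (Req_EM_T a b)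
  | |- context [Rlt_dec ?a ?b] => destruct (Rlt_dec a b)
  | |- context [Rle_dec ?a ?b] => destruct (Rle_dec a b)
  end.

Ltac facts lam k0 H := pose proof (col_facts lam k0 H); pose proof (col_facts lam (S k0) H);
  pose proof (col_facts lam (S (S k0)) H); simplcol.

Ltac split3 X B := let h := fresh "h" in destruct (Rtotal_order X B) as [h|[h|h]].

Ltac fXS_tac lam k0 :=
  unfold F, Wr; cbn [fst snd]; simplcol; destr_ifs;
  match goal with |- exists k, _ /\ InP _ _ (?X, _) =>
    split3 X (cc lam k0); split3 X (cd lam k0); split3 X (cd lam (S k0)) end;
  first [ exists k0; split; [auto|solve_InP]
        | exists (S k0); split; [auto|solve_InP]
        | exists (S (S k0)); split; [auto|solve_InP]
        | exfalso; lra ].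

Lemma fXS_S lam k0 p : 0 < lam -> InP lam (S k0) p ->
  exists k, (k = k0 \/ k = S k0 \/ k = S (S k0)) /\ InP lam k (F lam (S k0) p).
Proof.
  intros H Hp. destruct p as [x y]. facts lam k0 H.
  unfold InP in Hp; cbn [fst snd] in Hp; simplcol.
  destruct Hp as [[? ?]|[[? ?]|[[? ?]|[? ?]]]]; fXS_tac lam k0.
Qed.

Lemma fXS_0 lam p : 0 < lam -> InP lam 0 p ->
  exists k, (k = 0%nat \/ k = 1%nat \/ k = 2%nat) /\ InP lam k (F lam 0 p).
Proof.
  intros H Hp. destruct p as [x y]. facts lam 0%nat H.
  unfold InP in Hp; cbn [fst snd] in Hp; simplcol.
  destruct Hp as [[? ?]|[[? ?]|[[? ?]|[? ?]]]]; fXS_tac lam 0%nat.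
Qed.

Lemma fXS lam n p : 0 < lam -> InP lam n p -> XS lam (F lam n p).
Proof.
  intros H Hp. apply XS_iff; auto. destruct n.
  - destruct (fXS_0 lam p H Hp) as [k [_ Hk]]; eauto.
  - destruct (fXS_S lam n p H Hp) as [k [_ Hk]]; eauto.
Qed.

Ltac rw_col l k X Y H := rewrite (f_eq l k (X,Y) H) by solve_InP.
Ltac tryc l k X Y H := first [rw_col l k X Y H | exfalso; lra].
Ltac step l k0 H := match goal with |- context [fm l (?X, ?Y)] =>
  let h := fresh "h" in let h' := fresh "h" in
  destruct (Rtotal_order X (cd l k0)) as [h|[h|h]];
  [ destruct (Rtotal_order X (cc l k0)) as [h'|[h'|h']];
      [tryc l k0 X Y H | tryc l k0 X Y H | tryc l (S k0) X Y H]
  | tryc l (S k0) X Y H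
  | destruct (Rtotal_order X (cd l (S k0))) as [h'|[h'|h']];
      [tryc l (S (S k0)) X Y H | tryc l (S (S k0)) X Y H | exfalso; lra]]
  end; unfold F, Wr; cbn [fst snd]; simplcol; destr_ifs; try (exfalso; lra).

Lemma f3_S lam k0 x y : 0 < lam -> InP lam (S k0) (x,y) ->
  fm lam (fm lam (fm lam (x,y))) = (x,y).
Proof.
  intros H Hp. facts lam k0 H.
  rewrite (f_eq lam (S k0) (x,y) H Hp).
  unfold InP in Hp; cbn [fst snd] in Hp; simplcol.
  unfold F, Wr; cbn [fst snd]; simplcol; destr_ifs; try (exfalso; lra).
  all: destruct Hp as [[? ?]|[[? ?]|[[? ?]|[? ?]]]]; try (exfalso; lra).
  all: step lam k0 H.
  all: step lam k0 H.
  all: f_equal; lra.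
Qed.


Lemma f3_0 lam x y : 0 < lam -> InP lam 0%nat (x,y) ->
  fm lam (fm lam (fm lam (x,y))) = (x,y).
Proof.
  intros H Hp. facts lam 0%nat H.
  rewrite (f_eq lam 0%nat (x,y) H Hp).
  unfold InP in Hp; cbn [fst snd] in Hp; simplcol.
  unfold F, Wr; cbn [fst snd]; simplcol; destr_ifs; try (exfalso; lra).
  all: destruct Hp as [[? ?]|[[? ?]|[[? ?]|[? ?]]]]; try (exfalso; lra).
  all: step lam 0%nat H.
  all: step lam 0%nat H.
  all: f_equal; lra.
Qed.

Lemma f3 lam p : 0 < lam -> XS lam p -> fm lam (fm lam (fm lam p)) = p.
Proof.
  intros H Hp. apply XS_iff in Hp; auto. destruct Hp as [n Hn]. destruct p as [x y].
  destruct n. apply f3_0; auto. apply (f3_S lam n); auto.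
Qed.

Lemma fm_XS lam p : 0 < lam -> XS lam p -> XS lam (fm lam p).
Proof.
  intros H Hp. pose proof Hp as Hp'. apply XS_iff in Hp'; auto. destruct Hp' as [n Hn].
  rewrite (f_eq lam n p H Hn). apply fXS; auto.
Qed.

Lemma cb_pred_ca lam m : cb lam (m - 1) = ca lam m.
Proof. reflexivity. Qed.

Lemma sp_inj lam i j : 0 < lam -> sp lam i = sp lam j -> i = j.
Proof.
  intros H E. destruct (Nat.lt_trichotomy i j) as [h|[h|h]]; auto.
  - pose proof (sp_lt lam _ _ H h). lra.
  - pose proof (sp_lt lam _ _ H h). lra.
Qed.

Lemma KC1 lam n X Y : 0 < lam -> cb lam n < X < cc lam n -> XS lam (X,Y) ->
  ca lam n <= Y < cd lam n.
Proof.
  intros H HX HS. apply XS_iff in HS; auto. destruct HS as [m Hm].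
  assert (m = n). { apply InP_col in Hm; auto. simpl in Hm. eapply col_uniq; eauto. lra. }
  subst m. pose proof (col_facts lam n H).
  destruct Hm as [h|[h|[h|h]]]; simpl in h; lra.
Qed.

Lemma KC2 lam n X Y q : 0 < lam -> cb lam n < X < cc lam n -> GL lam q (X,Y) ->
  Y = cd lam n /\ q = (X, ca lam n).
Proof.
  intros H HX [m [[x [Hx [E ->]]]|[y [Hy [E ->]]]]]; injection E; intros; subst.
  - assert (m = n). { apply (col_uniq lam m n x H); lra. } subst. auto.
  - exfalso. unfold ca in HX. apply (sp_not_in lam (m-1) n H); lra.
Qed.

Lemma KC4 lam n Y q : 0 < lam -> GL lam q (cc lam n, Y) -> cd lam n < Y.
Proof.
  intros H [m [[x [Hx [E ->]]]|[y [Hy [E ->]]]]]; injection E; intros; subst.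
  - exfalso. apply (sp_not_in lam (S n) m H); unfold cc in *; lra.
  - unfold cc, ca in H1. assert (S n = m - 1)%nat.
    { apply (f_equal (fun t => t)) in H1.
      destruct (Nat.lt_trichotomy (S n) (m-1)) as [h|[h|h]]; auto.
      - pose proof (sp_lt lam _ _ H h). lra.
      - pose proof (sp_lt lam _ _ H h). lra. }
    assert (m = S (S n)) by lia. subst m. unfold cd. unfold cb in Hy. lra.
Qed.

Lemma KC5 lam X Y q : 0 < lam -> X < 0 -> ~ XS lam (X,Y) /\ ~ GL lam q (X,Y).
Proof.
  intros H HX. split.
  - intros HS. apply XS_iff in HS; auto. destruct HS as [m Hm].
    apply InP_col in Hm; auto. simpl in Hm. pose proof (col_facts lam m H).
    unfold cb in *. pose proof (sp_nonneg lam m H). lra.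
  - intros [m [[x [Hx [E ->]]]|[y [Hy [E ->]]]]]; injection E; intros; subst.
    + pose proof (col_facts lam m H). unfold cb in *. pose proof (sp_nonneg lam m H). lra.
    + pose proof (col_facts lam m H). lra.
Qed.

Lemma GL_XS lam q z : 0 < lam -> GL lam q z -> XS lam q.
Proof.
  intros H [m [[x [Hx [-> ->]]]|[y [Hy [-> ->]]]]]; apply XS_iff; auto.
  - exists m. right; right; left. simpl. lra.
  - exists (S m). right; right; right. simpl. rewrite caS, cbS, ccS. lra.
Qed.

Lemma XS_notGL lam q z : 0 < lam -> XS lam z -> GL lam q z -> False.
Proof.
  intros H HS [m [[x [Hx [-> ->]]]|[y [Hy [-> ->]]]]].
  - apply KC1 with (n:=m) in HS; auto. lra.
  - apply XS_iff in HS; auto. destruct HS as [k Hk].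
    pose proof (InP_col lam k _ H Hk). simpl in H0.
    pose proof (col_facts lam k H).
    destruct (Req_dec (ca lam m) (cc lam k)) as [E|NE].
    + assert (G : GL lam (cd lam m, y) (cc lam k, y)).
      { exists m. right. exists y. rewrite <- E. auto. }
      apply KC4 in G; auto. destruct Hk as [h|[h|[h|h]]]; simpl in h; lra.
    + apply (sp_not_in lam (m-1) k H); unfold ca in *; lra.
Qed.

Lemma GL_uniq_q lam q q' z : 0 < lam -> GL lam q z -> GL lam q' z -> q = q'.
Proof.
  intros H G1 G2. destruct G1 as [m [[x [Hx [-> ->]]]|[y [Hy [-> ->]]]]].
  - apply KC2 with (n:=m) in G2; auto. destruct G2; auto.
  - destruct G2 as [m' [[x' [Hx' [E ->]]]|[y' [Hy' [E ->]]]]]; injection E; intros; subst.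
    + exfalso. apply (sp_not_in lam (m-1) m' H); unfold ca in *; lra.
    + assert (m = m').
      { unfold ca in H1. destruct (Nat.lt_trichotomy (m-1) (m'-1)) as [h|[h|h]].
        - pose proof (sp_lt lam _ _ H h). lra.
        - destruct (Nat.eq_dec m m'); auto. exfalso.
          assert ((m = 0 /\ m' = 1) \/ (m = 1 /\ m' = 0))%nat by lia.
          destruct H0 as [[-> ->]|[-> ->]]; pose proof (col_facts lam 0 H);
          rewrite cbS in *; rewrite cb0 in *; lra.
        - pose proof (sp_lt lam _ _ H h). lra. }
      subst. auto.
Qed.

Lemma GL_uniq_z lam q z z' : 0 < lam -> GL lam q z -> GL lam q z' -> z = z'.
Proof.
  intros H G1 G2. destruct G1 as [m [[x [Hx [-> E1]]]|[y [Hy [-> E1]]]]];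
  destruct G2 as [m' [[x' [Hx' [-> E2]]]|[y' [Hy' [-> E2]]]]]; rewrite E1 in E2;
  injection E2; intros; subst.
  - assert (m = m') by (apply (col_uniq lam m m' x' H); lra). subst; auto.
  - exfalso. apply (sp_not_in lam (S (S m')) m H); unfold cd in *; lra.
  - exfalso. apply (sp_not_in lam (S (S m)) m' H); unfold cd in *; lra.
  - assert (m = m'). { unfold cd in H1. apply sp_inj in H1; auto. lia. } subst; auto.
Qed.



Lemma chart_inv lam p v q : 0 < lam < 1 -> chartR lam p v q ->
  (XS lam (padd p v) /\ q = padd p v) \/ GL lam q (padd p v) \/
  exists p', GL lam p p' /\ ((XS lam (padd p' v) /\ q = padd p' v) \/ GL lam q (padd p' v)).
Proof.
  intros H Hc. unfold chartR, rep in Hc.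
  destruct Hc as [[h|h]|[p' [h1 [h2|h2]]]].
  - left; auto.
  - right; left. apply glue_iff; auto.
  - right; right. exists p'. split. apply glue_iff; auto. left; auto.
  - right; right. exists p'. split. apply glue_iff; auto. right. apply glue_iff; auto.
Qed.

Lemma chart_XS lam p v q : 0 < lam < 1 -> chartR lam p v q -> XS lam q.
Proof.
  intros H Hc. assert (H0 : 0 < lam) by lra.
  apply chart_inv in Hc; auto.
  destruct Hc as [[h ->]|[h|[p' [_ [[h ->]|h]]]]]; auto; eapply GL_XS; eauto.
Qed.

Lemma mk_direct lam p w q : XS lam q -> q = padd p w -> chartR lam p w q.
Proof. intros H E. left. left. subst. auto. Qed.

Lemma mk_glue lam p p2 w q : 0 < lam < 1 -> GL lam p p2 -> XS lam q -> q = padd p2 w ->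
  chartR lam p w q.
Proof. intros H G HS E. right. exists p2. split. apply glue_iff; auto. left. subst; auto. Qed.

Lemma mapR v : mapply Rmat v = (- fst v - snd v, fst v).
Proof. unfold mapply, Rmat; simpl. f_equal; ring. Qed.

Lemma vbound v e : 0 < e -> pnorm2 v < e * e -> -e < fst v < e /\ -e < snd v < e.
Proof.
  intros He Hv. unfold pnorm2 in Hv. destruct v as [a b]; simpl in *.
  split; split; nra.
Qed.

Lemma GL_Rect lam n x y p' : 0 < lam -> cb lam n < x < cc lam n -> ca lam n < y ->
  GL lam (x,y) p' -> False.
Proof.
  intros H Hx Hy [m [[x' [Hx' [_ E]]]|[y' [Hy' [_ E]]]]]; injection E; intros; subst.
  - assert (m = n) by (apply (col_uniq lam m n x' H); lra). subst. lra.
  - apply (sp_not_in lam (S (S m)) n H); unfold cd in *; lra.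
Qed.

Lemma GL_Slit lam n y p' : 0 < lam -> cb lam n < y -> GL lam (cc lam n, y) p' -> False.
Proof.
  intros H Hy [m [[x' [Hx' [_ E]]]|[y' [Hy' [_ E]]]]]; injection E; intros; subst.
  - apply (sp_not_in lam (S n) m H); unfold cc in *; lra.
  - unfold cd, cc in H1. apply sp_inj in H1; auto. injection H1; intros; subst.
    rewrite cbS in Hy. lra.
Qed.

Ltac minfacts := repeat match goal with
  | |- context [Rmin ?A ?B] => let h1 := fresh "m" in let h2 := fresh "m" in
      pose proof (Rmin_l A B) as h1; pose proof (Rmin_r A B) as h2;
      set (Rmin A B) in *
  end.

Lemma eps_min a b c d e : 0 < a -> 0 < b -> 0 < c -> 0 < d -> 0 < e ->
  exists eps, 0 < eps /\ eps <= a /\ eps <= b /\ eps <= c /\ eps <= d /\ eps <= e.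
Proof.
  intros. exists (Rmin a (Rmin b (Rmin c (Rmin d e)))).
  pose proof (Rmin_l a (Rmin b (Rmin c (Rmin d e)))).
  pose proof (Rmin_r a (Rmin b (Rmin c (Rmin d e)))).
  pose proof (Rmin_l b (Rmin c (Rmin d e))).
  pose proof (Rmin_r b (Rmin c (Rmin d e))).
  pose proof (Rmin_l c (Rmin d e)).
  pose proof (Rmin_r c (Rmin d e)).
  pose proof (Rmin_l d e). pose proof (Rmin_r d e).
  repeat split; try lra.
  repeat (apply Rmin_glb_lt; auto).
Qed.

Lemma chart_Rect lam n x y v q eps : 0 < lam < 1 ->
  cb lam n < x < cc lam n -> ca lam n < y < cd lam n ->
  -eps < fst v < eps -> -eps < snd v < eps ->
  eps <= x - cb lam n -> eps <= cc lam n - x -> eps <= y - ca lam n -> eps <= cd lam n - y ->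
  chartR lam (x,y) v q -> q = (x + fst v, y + snd v).
Proof.
  intros H Hx Hy H1 H2 e1 e2 e3 e4 Hc. assert (H0 : 0 < lam) by lra.
  destruct v as [v1 v2]; simpl in *.
  apply chart_inv in Hc; auto. unfold padd in Hc; simpl in Hc.
  destruct Hc as [[h ->]|[G|[p' [G _]]]]; auto.
  - apply (KC2 lam n) in G; auto. lra. lra.
  - exfalso. eapply GL_Rect; eauto. lra.
Qed.

Ltac img := rewrite ?mapR; unfold F, Wr, padd; cbn [fst snd]; destr_ifs; cbn [fst snd];
  first [ f_equal; lra | exfalso; lra ].

Lemma locRect lam n x y : 0 < lam < 1 -> cb lam n < x < cc lam n -> ca lam n < y < cd lam n ->
  exists eps, 0 < eps /\ forall v q, pnorm2 v < eps * eps -> chartR lam (x,y) v q ->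
    chartR lam (fm lam (x,y)) (mapply Rmat v) (fm lam q).
Proof.
  intros H Hx Hy. assert (H0 : 0 < lam) by lra. pose proof (col_facts lam n H0).
  assert (Hp : InP lam n (x,y)) by (left; simpl; lra).
  rewrite (f_eq lam n (x,y) H0 Hp).
  destruct (Rtotal_order (ca lam n + cb lam n + cc lam n - x - y) (ca lam n)) as [hr|[hr|hr]].
  - destruct (eps_min (x - cb lam n) (cc lam n - x) (y - ca lam n) (cd lam n - y)
      ((ca lam n - (ca lam n + cb lam n + cc lam n - x - y))/2)) as [eps [He [e1 [e2 [e3 [e4 e5]]]]]]; try lra.
    exists eps. split; auto. intros v q Hv Hc.
    destruct (vbound v eps He Hv) as [b1 b2].
    pose proof (chart_Rect lam n x y v q eps H Hx Hy b1 b2 e1 e2 e3 e4 Hc) as ->.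
    destruct v as [v1 v2]; cbn [fst snd] in *.
    assert (Hq : InP lam n (x+v1, y+v2)) by (left; simpl; lra).
    rewrite (f_eq lam n _ H0 Hq). apply mk_direct. apply fXS; auto. img.
  - destruct (eps_min (x - cb lam n) (cc lam n - x) (y - ca lam n) (cd lam n - y) 1)
      as [eps [He [e1 [e2 [e3 [e4 e5]]]]]]; try lra.
    exists eps. split; auto. intros v q Hv Hc.
    destruct (vbound v eps He Hv) as [b1 b2].
    pose proof (chart_Rect lam n x y v q eps H Hx Hy b1 b2 e1 e2 e3 e4 Hc) as ->.
    destruct v as [v1 v2]; cbn [fst snd] in *.
    assert (Hq : InP lam n (x+v1, y+v2)) by (left; simpl; lra).
    rewrite (f_eq lam n _ H0 Hq).
    destruct (Rle_lt_dec 0 (v1 + v2)).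
    + apply mk_direct. apply fXS; auto. img.
    + apply (mk_glue lam _ (ca lam n, x)); auto.
      * exists n. right. exists x. split. lra. split; auto. unfold F, Wr; cbn [fst snd]; destr_ifs;
        first [f_equal; lra | exfalso; lra].
      * apply fXS; auto.
      * img.
  - destruct (eps_min (x - cb lam n) (cc lam n - x) (y - ca lam n) (cd lam n - y)
      (((ca lam n + cb lam n + cc lam n - x - y) - ca lam n)/2)) as [eps [He [e1 [e2 [e3 [e4 e5]]]]]]; try lra.
    exists eps. split; auto. intros v q Hv Hc.
    destruct (vbound v eps He Hv) as [b1 b2].
    pose proof (chart_Rect lam n x y v q eps H Hx Hy b1 b2 e1 e2 e3 e4 Hc) as ->.
    destruct v as [v1 v2]; cbn [fst snd] in *.
    assert (Hq : InP lam n (x+v1, y+v2)) by (left; simpl; lra).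
    rewrite (f_eq lam n _ H0 Hq). apply mk_direct. apply fXS; auto. img.
Qed.

Ltac solve_InP' := unfold InP; cbn [fst snd]; simplcol;
  first [left; split; lra | right; left; split; lra | right; right; left; split; lra
        | right; right; right; split; lra].

Lemma locLh lam n x : 0 < lam < 1 -> cb lam n < x < cc lam n ->
  exists eps, 0 < eps /\ forall v q, pnorm2 v < eps * eps -> chartR lam (x, ca lam n) v q ->
    chartR lam (fm lam (x, ca lam n)) (mapply Rmat v) (fm lam q).
Proof.
  intros H Hx. assert (H0 : 0 < lam) by lra. pose proof (col_facts lam n H0).
  assert (Hp : InP lam n (x, ca lam n)) by (right; right; left; simpl; lra).
  rewrite (f_eq lam n _ H0 Hp).
  destruct (eps_min (x - cb lam n) (cc lam n - x) (cd lam n - ca lam n) ((cc lam n - x)/2) (cd lam n - cc lam n))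
    as [eps [He [e1 [e2 [e3 [e4 e5]]]]]]; try lra.
  exists eps. split; auto. intros [v1 v2] q Hv Hc.
  destruct (vbound _ eps He Hv) as [b1 b2]; cbn [fst snd] in *.
  assert (G0 : GL lam (x, ca lam n) (x, cd lam n)).
  { exists n. left. exists x. auto. }
  assert (Hq : (0 <= v2 /\ q = (x+v1, ca lam n + v2)) \/ (v2 < 0 /\ q = (x+v1, cd lam n + v2))).
  { apply chart_inv in Hc; auto. unfold padd in Hc; cbn [fst snd] in Hc.
    destruct Hc as [[h ->]|[G|[p' [G [[h ->]|G']]]]].
    - apply (KC1 lam n) in h; auto; [|lra]. left. split; auto; lra.
    - apply (KC2 lam n) in G; [|auto|lra]. lra.
    - pose proof (GL_uniq_z lam _ _ _ H0 G G0) as ->. cbn [fst snd] in *.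
      apply (KC1 lam n) in h; auto; [|lra]. right. split; auto; lra.
    - pose proof (GL_uniq_z lam _ _ _ H0 G G0) as ->. cbn [fst snd] in *.
      apply (KC2 lam n) in G'; [|auto|lra]. destruct G' as [E ->].
      left. split. lra. f_equal. lra. }
  destruct Hq as [[h ->]|[h ->]].
  - assert (Hq : InP lam n (x+v1, ca lam n + v2)).
    { destruct h as [h|h]. left; simpl; lra. right; right; left; simpl; lra. }
    rewrite (f_eq lam n _ H0 Hq). apply mk_direct. apply fXS; auto. img.
  - assert (Hq : InP lam n (x+v1, cd lam n + v2)) by (left; simpl; lra).
    rewrite (f_eq lam n _ H0 Hq). apply mk_direct. apply fXS; auto. img.
Qed.

Lemma locSlit lam n y : 0 < lam < 1 -> cb lam n < y < cd lam n ->
  exists eps, 0 < eps /\ forall v q, pnorm2 v < eps * eps -> chartR lam (cc lam n, y) v q ->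
    chartR lam (fm lam (cc lam n, y)) (mapply Rmat v) (fm lam q).
Proof.
  intros H Hy. assert (H0 : 0 < lam) by lra. pose proof (col_facts lam n H0).
  pose proof (col_facts lam (S n) H0). simplcol.
  assert (Hp : InP lam n (cc lam n, y)) by (right; left; simpl; lra).
  rewrite (f_eq lam n _ H0 Hp).
  destruct (eps_min (cc lam n - cb lam n) (cd lam n - cc lam n) ((y - cb lam n)/2) ((cd lam n - y)/2) 1)
    as [eps [He [e1 [e2 [e3 [e4 e5]]]]]]; try lra.
  exists eps. split; auto. intros [v1 v2] q Hv Hc.
  destruct (vbound _ eps He Hv) as [b1 b2]; cbn [fst snd] in *.
  assert (Hq : q = (cc lam n + v1, y + v2)).
  { apply chart_inv in Hc; auto. unfold padd in Hc; cbn [fst snd] in Hc.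
    destruct Hc as [[h ->]|[G|[p' [G _]]]]; auto.
    - destruct (Rtotal_order v1 0) as [h|[h|h]].
      + apply (KC2 lam n) in G; [lra|auto|lra].
      + subst v1. rewrite Rplus_0_r in G. apply KC4 in G; auto. lra.
      + apply (KC2 lam (S n)) in G; [|auto|rewrite cbS, ccS; lra]. lra.
    - exfalso. apply (GL_Slit lam n y p' H0); [lra|exact G]. }
  subst q.
  destruct (Rtotal_order v1 0) as [h|[h|h]].
  - assert (Hq : InP lam n (cc lam n + v1, y + v2)) by (left; simpl; lra).
    rewrite (f_eq lam n _ H0 Hq). apply mk_direct. apply fXS; auto. img.
  - subst v1. assert (Hq : InP lam n (cc lam n + 0, y + v2)) by (right; left; simpl; lra).
    rewrite (f_eq lam n _ H0 Hq). apply mk_direct. apply fXS; auto. img.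
  - assert (Hq : InP lam (S n) (cc lam n + v1, y + v2)) by (left; simpl; simplcol; lra).
    rewrite (f_eq lam (S n) _ H0 Hq). apply mk_direct. apply fXS; auto.
    rewrite ?mapR; unfold F, Wr, padd; cbn [fst snd]; simplcol; destr_ifs; cbn [fst snd];
    first [ f_equal; lra | exfalso; lra ].
Qed.

Lemma eps_min6 a b c d e g : 0 < a -> 0 < b -> 0 < c -> 0 < d -> 0 < e -> 0 < g ->
  exists eps, 0 < eps /\ eps <= a /\ eps <= b /\ eps <= c /\ eps <= d /\ eps <= e /\ eps <= g.
Proof.
  intros. destruct (eps_min a b c d (Rmin e g)) as [eps Heps]; auto.
  apply Rmin_glb_lt; auto.
  pose proof (Rmin_l e g). pose proof (Rmin_r e g).
  exists eps. intuition lra.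
Qed.

Lemma cc_le_cdpred lam m : 0 < lam -> cc lam m <= cd lam (m - 1).
Proof.
  intros H. destruct m. pose proof (col_facts lam 0 H). simpl. lra.
  simpl. rewrite Nat.sub_0_r. rewrite <- ccS. lra.
Qed.

Lemma chart_Lvt lam m y v q eps : 0 < lam < 1 -> cb lam m < y < cc lam m ->
  -eps < fst v < eps -> -eps < snd v < eps -> 0 < eps ->
  eps <= cd lam m - cc lam m -> eps <= cd lam (S m) - cd lam m ->
  eps <= (y - cb lam m)/2 -> eps <= (cc lam m - y)/2 ->
  eps <= cc lam (m-1) - cb lam (m-1) -> eps <= cc lam (m-2) - cb lam (m-2) ->
  chartR lam (cd lam m, y) v q ->
  (fst v <= 0 /\ q = (cd lam m + fst v, y + snd v)) \/
  (0 < fst v /\ q = (ca lam m + fst v, y + snd v)).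
Proof.
  intros H Hy b1 b2 He e1 e2 e3 e4 e5 e6 Hc. assert (H0 : 0 < lam) by lra.
  pose proof (col_facts lam m H0). pose proof (col_facts lam (S m) H0).
  pose proof (col_facts lam (S (S m)) H0). pose proof (cc_le_cdpred lam m H0).
  simplcol.
  destruct v as [v1 v2]; cbn [fst snd] in *.
  assert (G0 : GL lam (cd lam m, y) (ca lam m, y)) by (exists m; right; exists y; auto).
  apply chart_inv in Hc; auto. unfold padd in Hc; cbn [fst snd] in Hc.
  destruct Hc as [[h ->]|[G|[p' [G [[h ->]|G']]]]].
  - destruct (Rle_lt_dec v1 0). left; auto.
    exfalso. apply (KC1 lam (S (S m))) in h; auto; simplcol; lra.
  - exfalso. destruct (Rtotal_order v1 0) as [h|[h|h]].
    + apply (KC2 lam (S m)) in G; auto; simplcol; lra.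
    + subst v1. rewrite Rplus_0_r in G. rewrite <- ccS in G. apply KC4 in G; auto.
      simplcol. lra.
    + apply (KC2 lam (S (S m))) in G; auto; simplcol; lra.
  - pose proof (GL_uniq_z lam _ _ _ H0 G G0) as ->. cbn [fst snd] in *.
    destruct (Rtotal_order v1 0) as [h'|[h'|h']].
    + exfalso. destruct m as [|[|k]].
      * apply (KC5 lam (ca lam 0 + v1) (y + v2) (0,0)) in H0; [tauto|rewrite ca0; lra].
      * apply (KC5 lam (ca lam 1 + v1) (y + v2) (0,0)) in H0; [tauto|].
        change (ca lam 1) with (cb lam 0). rewrite cb0. lra.
      * simpl in e6; rewrite ?Nat.sub_0_r in e6. apply (KC1 lam k) in h; auto; simplcol; [lra|].
        simplcol. lra.
    + exfalso. subst v1. rewrite Rplus_0_r in h.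
      apply (XS_notGL lam (cd lam m, y + v2) (ca lam m, y + v2)); auto.
      exists m. right. exists (y + v2). split; auto; lra.
    + right. split; auto.
  - pose proof (GL_uniq_z lam _ _ _ H0 G G0) as ->. cbn [fst snd] in *.
    destruct (Rtotal_order v1 0) as [h'|[h'|h']].
    + exfalso. destruct m as [|[|k]].
      * apply (KC5 lam (ca lam 0 + v1) (y + v2) q) in H0; [tauto|rewrite ca0; lra].
      * apply (KC5 lam (ca lam 1 + v1) (y + v2) q) in H0; [tauto|].
        change (ca lam 1) with (cb lam 0). rewrite cb0. lra.
      * simpl in e6; rewrite ?Nat.sub_0_r in e6. apply (KC2 lam k) in G'; auto; simplcol; [lra|].
        simplcol. lra.
    + subst v1. rewrite Rplus_0_r in G'. left. split. lra.
      rewrite Rplus_0_r. eapply GL_uniq_q; eauto.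
      exists m. right. exists (y + v2). split; auto; lra.
    + exfalso. apply (KC2 lam (m-1)) in G'; auto. lra.
      rewrite cb_pred_ca in *. lra.
Qed.

Lemma locLvt lam m y : 0 < lam < 1 -> cb lam m < y < cc lam m ->
  exists eps, 0 < eps /\ forall v q, pnorm2 v < eps * eps -> chartR lam (cd lam m, y) v q ->
    chartR lam (fm lam (cd lam m, y)) (mapply Rmat v) (fm lam q).
Proof.
  intros H Hy. assert (H0 : 0 < lam) by lra.
  pose proof (col_facts lam m H0). pose proof (col_facts lam (S m) H0).
  pose proof (col_facts lam (S (S m)) H0). pose proof (col_facts lam (m-1) H0).
  pose proof (col_facts lam (m-2) H0). simplcol.
  assert (Hp : InP lam (S m) (cd lam m, y)) by solve_InP'.
  rewrite (f_eq lam (S m) _ H0 Hp).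
  destruct (eps_min6 (cd lam m - cc lam m) (cd lam (S m) - cd lam m) ((y - cb lam m)/2)
    ((cc lam m - y)/2) (cc lam (m-1) - cb lam (m-1)) (cc lam (m-2) - cb lam (m-2)))
    as [eps [He [e1 [e2 [e3 [e4 [e5 e6]]]]]]]; try lra.
  exists eps. split; auto. intros v q Hv Hc.
  destruct (vbound _ eps He Hv) as [b1 b2].
  destruct (chart_Lvt lam m y v q eps H Hy b1 b2 He e1 e2 e3 e4 e5 e6 Hc) as [[h ->]|[h ->]];
  destruct v as [v1 v2]; cbn [fst snd] in *.
  - destruct h as [h|h].
    + assert (Hq : InP lam (S m) (cd lam m + v1, y + v2)) by solve_InP'.
      rewrite (f_eq lam (S m) _ H0 Hq).
      apply (mk_glue lam _ (cb lam m + cc lam m - y, cd lam m)); auto.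
      * exists m. left. exists (cb lam m + cc lam m - y). split. lra. split; auto.
        unfold F, Wr; cbn [fst snd]; simplcol; destr_ifs; cbn [fst snd];
        first [f_equal; lra | exfalso; lra].
      * apply fXS; auto.
      * rewrite ?mapR; unfold F, Wr, padd; cbn [fst snd]; simplcol; destr_ifs; cbn [fst snd];
        first [ f_equal; lra | exfalso; lra ].
    + subst v1. assert (Hq : InP lam (S m) (cd lam m + 0, y + v2)) by solve_InP'.
      rewrite (f_eq lam (S m) _ H0 Hq). apply mk_direct. apply fXS; auto.
      rewrite ?mapR; unfold F, Wr, padd; cbn [fst snd]; simplcol; destr_ifs; cbn [fst snd];
      first [ f_equal; lra | exfalso; lra ].
  - destruct m as [|k].
    + assert (Hq : InP lam 0 (ca lam 0 + v1, y + v2)) by solve_InP'.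
      rewrite (f_eq lam 0 _ H0 Hq). apply mk_direct. apply fXS; auto.
      rewrite ?mapR; unfold F, Wr, padd; cbn [fst snd]; simplcol; destr_ifs; cbn [fst snd];
      first [ f_equal; lra | exfalso; lra ].
    + simpl in e5, e6, H4, H5. rewrite ?Nat.sub_0_r in *.
      assert (Hq : InP lam k (ca lam (S k) + v1, y + v2)) by solve_InP'.
      rewrite (f_eq lam k _ H0 Hq). apply mk_direct. apply fXS; auto.
      rewrite ?mapR; unfold F, Wr, padd; cbn [fst snd]; simplcol; destr_ifs; cbn [fst snd];
      first [ f_equal; lra | exfalso; lra ].
Qed.

Lemma loc lam p : 0 < lam < 1 -> XS lam p ->
  exists eps, 0 < eps /\ forall v q, pnorm2 v < eps * eps -> chartR lam p v q ->
    chartR lam (fm lam p) (mapply Rmat v) (fm lam q).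
Proof.
  intros H Hp. assert (H0 : 0 < lam) by lra. apply XS_iff in Hp; auto.
  destruct Hp as [n Hn]. destruct p as [x y].
  destruct Hn as [[h1 h2]|[[h1 h2]|[[h1 h2]|[h1 h2]]]]; cbn [fst snd] in *.
  - apply (locRect lam n); auto.
  - subst x. apply locSlit; auto.
  - subst y. apply locLh; auto.
  - subst x. destruct n as [|m].
    + exfalso. rewrite ca0, cb0 in h2. lra.
    + rewrite ccS. rewrite caS, cbS in h2. apply locLvt; auto.
Qed.

Lemma pnorm_R v : pnorm2 (mapply Rmat v) <= 3 * pnorm2 v.
Proof. rewrite mapR. unfold pnorm2. destruct v as [a b]; cbn [fst snd]. nra. Qed.

Lemma pnorm_nonneg v : 0 <= pnorm2 v.
Proof. unfold pnorm2. nra. Qed.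

Lemma affine lam : 0 < lam < 1 -> affine_homeo lam Rmat (fm lam).
Proof.
  intros H. assert (H0 : 0 < lam) by lra.
  assert (HX : forall p, XS lam p -> XS lam (fm lam p)) by (intros; apply fm_XS; auto).
  unfold affine_homeo. split; [|split; [|split; [|split; [|split]]]].
  - exact HX.
  - intros p q Hp Hq E. rewrite <- (f3 lam p H0 Hp), <- (f3 lam q H0 Hq). rewrite E. auto.
  - intros q Hq. exists (fm lam (fm lam q)). split. auto. apply f3; auto.
  - intros U [HU1 HU2]. split. intros p [hp _]; auto.
    intros p [Hp HUp]. destruct (HU2 _ HUp) as [e1 [He1 Hall]].
    destruct (loc lam p H Hp) as [e2 [He2 Hloc]].
    exists (Rmin e2 (e1/2)). split. apply Rmin_glb_lt; lra.
    intros v q Hv Hc. pose proof (Rmin_l e2 (e1/2)). pose proof (Rmin_r e2 (e1/2)).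
    set (e := Rmin e2 (e1/2)) in *.
    assert (0 < e) by (apply Rmin_glb_lt; lra).
    split. eapply chart_XS; eauto.
    apply (Hall (mapply Rmat v)).
    + pose proof (pnorm_R v). nra.
    + apply Hloc; auto. nra.
  - intros U [HU1 HU2]. split.
    + intros q [p [Hp <-]]. auto.
    + intros q [p [Hp Eq]].
      assert (Hpx : XS lam p) by auto.
      assert (Hq : XS lam q) by (subst; auto).
      destruct (HU2 _ Hp) as [eU [HeU HallU]].
      destruct (loc lam q H Hq) as [ea [Hea Ha]].
      destruct (loc lam (fm lam q) H (HX _ Hq)) as [eb [Heb Hb]].
      destruct (eps_min ea (eb/2) (eU/4) 1 1) as [e [He [e1 [e2 [e3 _]]]]]; try lra.
      exists e. split; auto. intros w q' Hw Hc.
      assert (Hq' : XS lam q') by (eapply chart_XS; eauto).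
      exists (fm lam (fm lam q')). split.
      * assert (E : fm lam (fm lam q) = p).
        { subst q. apply f3; auto. }
        apply (HallU (mapply Rmat (mapply Rmat w))).
        -- pose proof (pnorm_R w). pose proof (pnorm_R (mapply Rmat w)).
           pose proof (pnorm_nonneg w). nra.
        -- rewrite <- E. apply Hb. pose proof (pnorm_R w). pose proof (pnorm_nonneg w). nra.
           apply Ha; auto. nra.
      * apply f3; auto.
  - intros p Hp. apply loc; auto.
Qed.

Theorem mainTheorem7 :
  forall lam : R, 0 < lam < 1 ->
    (exists f : pt -> pt,
        affine_homeo lam Rmat f /\ orientation_preserving Rmat) /\
    (* R is elliptic of order 3 in PSL(2,R) *)
    Rabs (mtrace Rmat) < 2 /\
    mmul Rmat (mmul Rmat Rmat) = mid2 /\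
    Rmat <> mid2 /\ Rmat <> mneg_id2.
Proof.
  intros lam H. split; [|split; [|split; [|split]]].
  - exists (fm lam). split. apply affine; auto.
    unfold orientation_preserving, mdet, Rmat; simpl. lra.
  - unfold mtrace, Rmat; simpl. unfold Rabs; destruct Rcase_abs; lra.
  - unfold mmul, Rmat, mid2; simpl. f_equal; ring.
  - unfold Rmat, mid2. intros E. injection E. intros. lra.
  - unfold Rmat, mneg_id2. intros E. injection E. intros. lra.
Qed.
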